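(* Consider a causal transformer viewed as a message-passing network on token positions $1,\dots,n$, with token representations $h^{(l)}_i\in\mathbb{R}^{k}$ at layer $l$ updated by $$h^{(l+1)}_i=\phi_l\Big(h^{(l)}_i,\ \sum_{j\le i}A^{(l)}_{ij}\,\psi_l\big(h^{(l)}_j\big)\Big),$$ where for every layer $l$: $A^{(l)}\in\mathbb{R}^{n\times n}$ is a lower-triangular, row-stochastic matrix with nonnegative entries that is treated as fixed (independent of the representations $h$); $\psi_l:\mathbb{R}^k\to\mathbb{R}^{k}$ and $\phi_l:\mathbb{R}^k\times\mathbb{R}^k\to\mathbb{R}^k$ are differentiable. Suppose there is a constant $C>0$ such that for all layers $l$ and all arguments, $\|\partial_1\phi_l\|\le C$ and $\|\partial_2\phi_l\|\,\|\nabla\psi_l\|\le C$ (operator norms), where $\partial_1,\partial_2$ denote the Jacobians of $\phi_l$ with respect to its first and second arguments. Then for every layer $L\ge 0$, every $r\ge 0$, and all positions $s\le d$, $$\left\|\frac{\partial h^{(L+r)}_d}{\partial h^{(L)}_s}\right\|\le C^{r}\Big(\prod_{t=0}^{r-1}\big(I+A^{(L+t)}\big)\Big)_{ds},$$ where $I$ is the $n\times n$ identity, the product is ordered with later layers on the left, i.e. $\prod_{t=0}^{r-1}(I+A^{(L+t)})=(I+A^{(L+r-1)})\cdots(I+A^{(L)})$, and the empty product ($r=0$) is $I$.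
   Context: $\|\cdot\|$ denotes the operator norm of a Jacobian matrix. In a standard transformer, $\psi_l(h_j)=h_jW_V$ (value projection), $A^{(l)}_{ij}$ are the causal softmax attention weights, and $\phi_l$ absorbs the residual connection, layer norms and MLP; the theorem is stated under the simplifying assumption that the attention weights do not depend on $h$. *)

(* Defs.v *)
From HB Require Import structures.
From mathcomp Require Import all_boot all_order all_algebra.
From mathcomp Require Import all_classical all_reals all_analysis.
Set Implicit Arguments. Unset Strict Implicit. Unset Printing Implicit Defensive.
Import Order.TTheory GRing.Theory Num.Theory.
Import numFieldNormedType.Exports.
Local Open Scope classical_set_scope.
Local Open Scope ring_scope.

Definition enorm {R : realType} {k : nat} (v : 'rV[R]_k) : R :=
  Num.sqrt (\sum_(j < k) v 0 j ^+ 2).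

Definition opnorm {R : realType} {k m : nat} (f : 'rV[R]_k -> 'rV[R]_m) : R :=
  sup [set enorm (f x) | x in [set x : 'rV[R]_k | enorm x <= 1]].

Definition setrow {R : realType} {n k : nat} (H : 'M[R]_(n, k)) (s : 'I_n)
  (x : 'rV[R]_k) : 'M[R]_(n, k) :=
  \matrix_(i, j) (if i == s then x 0 j else H i j).

Definition layer {R : realType} {n k : nat}
  (phi : nat -> 'rV[R]_k * 'rV[R]_k -> 'rV[R]_k) (psi : nat -> 'rV[R]_k -> 'rV[R]_k)
  (A : nat -> 'M[R]_n) (l : nat) (H : 'M[R]_(n, k)) : 'M[R]_(n, k) :=
  \matrix_(i, j)
    (phi l (row i H, \sum_(j0 < n | (j0 <= i)%N) A l i j0 *: psi l (row j0 H))) 0 j.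

Fixpoint run {R : realType} {n k : nat}
  (phi : nat -> 'rV[R]_k * 'rV[R]_k -> 'rV[R]_k) (psi : nat -> 'rV[R]_k -> 'rV[R]_k)
  (A : nat -> 'M[R]_n) (L r : nat) (H : 'M[R]_(n, k)) : 'M[R]_(n, k) :=
  match r with
  | 0 => H
  | r'.+1 => layer phi psi A (L + r') (run phi psi A L r' H)
  end.

Fixpoint prodIA {R : realType} {n : nat} (A : nat -> 'M[R]_n) (L r : nat) : 'M[R]_n :=
  match r with
  | 0 => 1%:M
  | r'.+1 => (1%:M + A (L + r')) *m prodIA A L r'
  end.

(* Main.v *)
Require Import Defs.
From HB Require Import structures.
From mathcomp Require Import all_boot all_order all_algebra.
From mathcomp Require Import all_classical all_reals all_analysis.
From mathcomp Require Import ring lra.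
Set Implicit Arguments. Unset Strict Implicit. Unset Printing Implicit Defensive.
Import Order.TTheory GRing.Theory Num.Theory.
Import numFieldNormedType.Exports.
Local Open Scope classical_set_scope.
Local Open Scope ring_scope.
Lemma lagrange (R : realType) (k : nat) (a b : 'I_k -> R) :
  (\sum_j a j * b j) ^+ 2 <= (\sum_j a j ^+ 2) * (\sum_j b j ^+ 2).
Proof.
have E1 : forall (f g : 'I_k -> R), (\sum_i f i) * (\sum_j g j) = \sum_i \sum_j f i * g j.
  move=> f g; rewrite mulr_suml; apply: eq_bigr => i _; by rewrite mulr_sumr.
have H0 : 0 <= \sum_i \sum_j (a i * b j - a j * b i) ^+ 2.
  by apply: sumr_ge0 => i _; apply: sumr_ge0 => j _; apply: sqr_ge0.
have H1 : \sum_i \sum_j (a i * b j - a j * b i) ^+ 2 =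
   \sum_i \sum_j (a i ^+ 2 * b j ^+ 2) + \sum_i \sum_j (b i ^+ 2 * a j ^+ 2)
   - 2 * \sum_i \sum_j ((a i * b i) * (a j * b j)).
  rewrite mulr_sumr -big_split -sumrB /=; apply: eq_bigr => i _.
  rewrite mulr_sumr -big_split -sumrB /=; apply: eq_bigr => j _; ring.
rewrite -!E1 in H1; rewrite H1 in H0; rewrite expr2; lra.
Qed.
Lemma enorm_ge0 (R : realType) (k : nat) (v : 'rV[R]_k) : 0 <= enorm v.
Proof. exact: sqrtr_ge0. Qed.

Lemma enorm0 (R : realType) (k : nat) : enorm (0 : 'rV[R]_k) = 0.
Proof. rewrite /enorm big1 ?sqrtr0 // => j _; by rewrite mxE expr0n. Qed.

Lemma enormZ (R : realType) (k : nat) (a : R) (v : 'rV[R]_k) :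
  enorm (a *: v) = `|a| * enorm v.
Proof.
rewrite /enorm (eq_bigr (fun j => a ^+ 2 * v 0 j ^+ 2)); last first.
  by move=> j _; rewrite mxE exprMn.
by rewrite -mulr_sumr sqrtrM ?sqr_ge0 // sqrtr_sqr.
Qed.

Lemma enorm_eq0 (R : realType) (k : nat) (v : 'rV[R]_k) : enorm v = 0 -> v = 0.
Proof.
move=> /eqP; rewrite /enorm sqrtr_eq0 => H.
have H2 : \sum_(j < k) v 0 j ^+ 2 = 0.
  by apply/eqP; rewrite eq_le H /=; apply: sumr_ge0 => j _; apply: sqr_ge0.
have := psumr_eq0P (fun j _ => sqr_ge0 (v 0 j)) H2 => H3.
apply/rowP => j; rewrite mxE; apply/eqP; rewrite -sqrf_eq0; apply/eqP; exact: H3.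
Qed.

Lemma coord_le_enorm (R : realType) (k : nat) (v : 'rV[R]_k) j :
  `|v 0 j| <= enorm v.
Proof.
rewrite -sqrtr_sqr /enorm ler_sqrt; last by apply: sumr_ge0 => i _; apply: sqr_ge0.
rewrite (bigD1 j) //= lerDl; apply: sumr_ge0 => i _; apply: sqr_ge0.
Qed.

Lemma enorm_add (R : realType) (k : nat) (a b : 'rV[R]_k) :
  enorm (a + b) <= enorm a + enorm b.
Proof.
have Ha := @enorm_ge0 _ _ a; have Hb := @enorm_ge0 _ _ b.
rewrite -(ger0_norm (@enorm_ge0 _ _ (a+b))) -[X in _ <= X]ger0_norm ?addr_ge0 //.
rewrite -ler_sqr ?nnegrE ?normr_ge0 //.
rewrite !real_normK ?num_real //.
have Sa : enorm a ^+ 2 = \sum_j a 0 j ^+ 2 by rewrite sqr_sqrtr // sumr_ge0 // => j _; apply: sqr_ge0.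
have Sb : enorm b ^+ 2 = \sum_j b 0 j ^+ 2 by rewrite sqr_sqrtr // sumr_ge0 // => j _; apply: sqr_ge0.
have Sab : enorm (a + b) ^+ 2 = \sum_j (a + b) 0 j ^+ 2 by rewrite sqr_sqrtr // sumr_ge0 // => j _; apply: sqr_ge0.
have E : \sum_j (a + b) 0 j ^+ 2 = \sum_j a 0 j ^+ 2 + \sum_j b 0 j ^+ 2 + 2 * \sum_j a 0 j * b 0 j.
  rewrite mulr_sumr -!big_split /=; apply: eq_bigr => j _; rewrite mxE; ring.
have CS := @lagrange _ _ (fun j => a 0 j) (fun j => b 0 j).
rewrite -Sa -Sb in CS.
have CS2 : \sum_j a 0 j * b 0 j <= enorm a * enorm b.
  rewrite -(ger0_norm (mulr_ge0 Ha Hb)).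
  apply: le_trans (ler_norm _) _.
  rewrite -ler_sqr ?nnegrE ?normr_ge0 // !real_normK ?num_real // exprMn //.
rewrite Sab E -Sa -Sb; nra.
Qed.

Lemma enorm_sum (R : realType) (k : nat) (I : Type) (s : seq I) (P : pred I)
  (F : I -> 'rV[R]_k) :
  enorm (\sum_(i <- s | P i) F i) <= \sum_(i <- s | P i) enorm (F i).
Proof.
apply: (big_ind2 (fun x y => enorm x <= y)) => //; first by rewrite enorm0.
move=> x1 y1 x2 y2 H1 H2; have := enorm_add x1 x2; have := lerD H1 H2; move=> X Y; exact: (le_trans Y X).
Qed.

Lemma mxnorm_le_enorm (R : realType) (k : nat) (v : 'rV[R]_k) : `|v| <= enorm v.
Proof.
rewrite (_ : `|v| = mx_norm v) // mx_normrE; apply: bigmax_le; first exact: enorm_ge0.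
by move=> [i j] _ /=; rewrite (ord1 i); apply: coord_le_enorm.
Qed.

Lemma enorm_le_mxnorm (R : realType) (k : nat) (v : 'rV[R]_k) :
  enorm v <= Num.sqrt (k%:R) * `|v|.
Proof.
rewrite -(ger0_norm (normr_ge0 v)) -sqrtr_sqr -sqrtrM // ler_sqrt; last by rewrite mulr_ge0 // sqr_ge0.
rewrite -[k in k%:R]card_ord -sumr_const mulr_suml; apply: ler_sum => j _.
have Hj : `|v 0 j| <= `|v|.
  have /mapP[x Hx Ex] : `|v ord0 j| \in [seq `|v x.1 x.2| | x : 'I_1 * 'I_k].
    by apply/mapP; exists (ord0, j) => //=; rewrite mem_enum.
  rewrite Ex (_ : `|v| = mx_norm v) // mx_normrE; apply/bigmax_geP; right => /=; by exists x.
have E : v 0 j ^+ 2 = `|v 0 j| ^+ 2 by rewrite real_normK ?num_real.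
rewrite mul1r E; have := normr_ge0 (v 0 j); nra.
Qed.
Lemma opnorm_bound (R : realType) (k m : nat) (f : 'rV[R]_k -> 'rV[R]_m) (B : R) :
  0 <= B -> (forall v, enorm (f v) <= B * enorm v) -> opnorm f <= B.
Proof.
move=> B0 Hf; apply: ge_sup.
  by exists (enorm (f 0)), 0 => //=; rewrite enorm0.
move=> _ [x /= Hx <-]; apply: le_trans (Hf x) _.
by rewrite -[leRHS]mulr1 ler_wpM2l.
Qed.

Lemma opnorm_lin (R : realType) (k m : nat) (D : {linear 'rV[R]_k -> 'rV[R]_m}) :
  continuous D -> forall v, enorm (D v) <= opnorm D * enorm v.
Proof.
move=> Dc.
have [K K0 HK] := linear_lipschitz Dc.
set S := [set enorm (D x) | x in [set x : 'rV[R]_k | enorm x <= 1]].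
have ubS : has_ubound S.
  exists (Num.sqrt m%:R * K) => _ [x /= Hx <-].
  apply: le_trans (enorm_le_mxnorm _) _.
  rewrite ler_wpM2l ?sqrtr_ge0 //.
  apply: le_trans (HK x) _; rewrite -[leRHS]mulr1 ler_wpM2l ?(ltW K0) //.
  exact: le_trans (mxnorm_le_enorm _) Hx.
move=> v.
case: (eqVneq (enorm v) 0) => [/enorm_eq0 ->|c0].
  rewrite raddf0 !enorm0 mulr0 //.
have cpos : 0 < enorm v by rewrite lt_def c0 enorm_ge0.
have [w Hw Ev] : exists2 w, enorm w = 1 & v = enorm v *: w.
  exists ((enorm v)^-1 *: v).
    by rewrite enormZ ger0_norm ?invr_ge0 ?enorm_ge0 // mulVf.
  by rewrite scalerA mulfV // scale1r.
have Dw : enorm (D w) <= opnorm D.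
  rewrite /opnorm -/S; apply: (ub_le_sup ubS); by exists w => //=; rewrite Hw.
rewrite {1}Ev linearZ /= enormZ ger0_norm ?enorm_ge0 // mulrC.
by rewrite ler_wpM2r ?enorm_ge0.
Qed.

Lemma opnorm_d (R : realType) (k m : nat) (f : 'rV[R]_k -> 'rV[R]_m) x :
  differentiable f x -> forall v, enorm ('d f x v) <= opnorm ('d f x) * enorm v.
Proof. move=> df; exact: opnorm_lin (diff_continuous df). Qed.
Lemma d_pairl (R : realType) (V W : normedModType R) (a : V) (b : W) :
  differentiable (fun u : V => (u, b)) a /\ 'd (fun u : V => (u, b)) a = (fun u => (u, 0)) :> (V -> V * W).
Proof.
have H : is_diff a (fun u : V => (u, b)) (fun u => (u, 0)).
  apply: (@is_diff_pair _ _ _ _ id id (cst b) 0 a); by typeclasses eauto.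
split; [exact: ex_diff | exact: diff_val].
Qed.

Lemma d_pairr (R : realType) (V W : normedModType R) (a : V) (b : W) :
  differentiable (fun w : W => (a, w)) b /\ 'd (fun w : W => (a, w)) b = (fun w => (0, w)) :> (W -> V * W).
Proof.
have H : is_diff b (fun w : W => (a, w)) (fun w => (0, w)).
  apply: (@is_diff_pair _ _ _ _ (cst a) 0 id id b); by typeclasses eauto.
split; [exact: ex_diff | exact: diff_val].
Qed.

Lemma d_phi (R : realType) (V W U : normedModType R) (f : V * W -> U) a b :
  differentiable f (a, b) ->
  [/\ differentiable (fun u => f (u, b)) a, differentiable (fun w => f (a, w)) b &
   forall u w, 'd f (a, b) (u, w) = 'd (fun u => f (u, b)) a u + 'd (fun w => f (a, w)) b w].
Proof.
move=> df.
have [dl El] := d_pairl a b; have [dr Er] := d_pairr a b.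
have Dl : differentiable (fun u => f (u, b)) a.
  by apply: (@differentiable_comp _ _ _ _ (fun u : V => (u, b)) f).
have Dr : differentiable (fun w => f (a, w)) b.
  by apply: (@differentiable_comp _ _ _ _ (fun w : W => (a, w)) f).
split => //.
move=> u w.
have -> : (fun u => f (u, b)) = f \o (fun u : V => (u, b)) by [].
have -> : (fun w => f (a, w)) = f \o (fun w : W => (a, w)) by [].
rewrite (diff_comp dl) //.
rewrite (diff_comp dr) //.
rewrite El Er /=.
rewrite -linearD; congr ('d f (a, b) _).
by apply/eqP; rewrite xpair_eqE /= ?addr0 ?add0r !eqxx.
Qed.
Lemma d_sum (R : realType) (V W : normedModType R) (I : Type) (s : seq I) (P : pred I)
  (F : I -> V -> W) x :
  (forall i, differentiable (F i) x) ->
  differentiable (fun y => \sum_(i <- s | P i) F i y) x /\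
  forall v, 'd (fun y => \sum_(i <- s | P i) F i y) x v = \sum_(i <- s | P i) 'd (F i) x v.
Proof.
move=> dF; elim: s => [|a s [IHd IHe]].
  have -> : (fun y => \sum_(i <- [::] | P i) F i y) = cst 0.
    by apply/funext => y; rewrite big_nil.
  by split => [|v]; [exact: differentiable_cst | rewrite diff_cst big_nil].
case Pa: (P a).
  have -> : (fun y => \sum_(i <- a :: s | P i) F i y) = F a + (fun y => \sum_(i <- s | P i) F i y).
    by apply/funext => y; rewrite big_cons Pa.
  split => [|v]; first exact: differentiableD.
  by rewrite big_cons Pa -IHe diffD.
have -> : (fun y => \sum_(i <- a :: s | P i) F i y) = (fun y => \sum_(i <- s | P i) F i y).
  by apply/funext => y; rewrite big_cons Pa.
by split => [|v] //; rewrite IHe big_cons Pa.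
Qed.
Lemma d_scale (R : realType) (V W : normedModType R) (a : R) (h : V -> W) x :
  differentiable h x ->
  differentiable (fun y => a *: h y) x /\ forall v, 'd (fun y => a *: h y) x v = a *: 'd h x v.
Proof.
move=> dh.
have Hs : is_diff (h x) ( *:%R a : W -> W) ( *:%R a) by exact: is_diff_scaler.
have Ds : differentiable ( *:%R a : W -> W) (h x) by exact: ex_diff.
have -> : (fun y => a *: h y) = ( *:%R a) \o h by [].
split; first exact: differentiable_comp.
move=> v; rewrite (diff_comp dh Ds).
by rewrite diff_val.
Qed.

Lemma opnorm_d_ge0 (R : realType) (k m : nat) (f : 'rV[R]_k -> 'rV[R]_m) x :
  differentiable f x -> 0 <= opnorm ('d f x).
Proof.
move=> df; have Dc := diff_continuous df.
have [K K0 HK] := linear_lipschitz Dc.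
set S := [set enorm ('d f x y) | y in [set y : 'rV[R]_k | enorm y <= 1]].
have ubS : has_ubound S.
  exists (Num.sqrt m%:R * K) => _ [y /= Hy <-].
  apply: le_trans (enorm_le_mxnorm _) _.
  rewrite ler_wpM2l ?sqrtr_ge0 //.
  apply: le_trans (HK y) _; rewrite -[leRHS]mulr1 ler_wpM2l ?(ltW K0) //.
  exact: le_trans (mxnorm_le_enorm _) Hy.
rewrite /opnorm -/S; apply: (ub_le_sup ubS).
by exists 0; rewrite /= ?enorm0 // raddf0 enorm0.
Qed.
Lemma row_setrow (R : realType) n k (H : 'M[R]_(n,k)) s x i :
  row i (setrow H s x) = if i == s then x else row i H.
Proof. apply/rowP => j; rewrite !mxE; by case: (i == s); rewrite ?mxE. Qed.

Lemma row_layer (R : realType) n k phi psi (A : nat -> 'M[R]_n) l (M : 'M[R]_(n,k)) i :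
  row i (layer phi psi A l M) =
  phi l (row i M, \sum_(j0 < n | (j0 <= i)%N) A l i j0 *: psi l (row j0 M)).
Proof. by apply/rowP => j; rewrite !mxE. Qed.

Lemma prodIA_S (R : realType) n (A : nat -> 'M[R]_n) L r i s :
  prodIA A L r.+1 i s = prodIA A L r i s + \sum_j A (L + r) i j * prodIA A L r j s.
Proof. by rewrite /= mulmxDl mul1mx !mxE. Qed.

Lemma prodIA_ge0 (R : realType) n (A : nat -> 'M[R]_n) L :
  (forall l i j, 0 <= A l i j) -> forall r i s, 0 <= prodIA A L r i s.
Proof.
move=> A0; elim=> [|r IH] i s.
  by rewrite /= mxE; case: (i == s); rewrite ?mulr1n ?mulr0n.
rewrite prodIA_S addr_ge0 // sumr_ge0 // => j _; exact: mulr_ge0.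
Qed.
Lemma main_ind (R : realType) (n k : nat) (A : nat -> 'M[R]_n)
  (phi : nat -> 'rV[R]_k * 'rV[R]_k -> 'rV[R]_k)
  (psi : nat -> 'rV[R]_k -> 'rV[R]_k) (C : R) (L : nat) (s : 'I_n) (H : 'M[R]_(n,k)) :
  (forall l (i j : 'I_n), 0 <= A l i j) ->
  (forall l (z : 'rV[R]_k * 'rV[R]_k), differentiable (phi l) z) ->
  (forall l (x : 'rV[R]_k), differentiable (psi l) x) ->
  0 <= C ->
  (forall l (x y : 'rV[R]_k), opnorm ('d (fun u => phi l (u, y)) x) <= C) ->
  (forall l (x y z : 'rV[R]_k),
      opnorm ('d (fun v => phi l (x, v)) y) * opnorm ('d (psi l) z) <= C) ->
  forall r (i : 'I_n),
    differentiable (fun x => row i (run phi psi A L r (setrow H s x))) (row s H) /\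
    forall v, enorm ('d (fun x => row i (run phi psi A L r (setrow H s x))) (row s H) v)
       <= C ^+ r * prodIA A L r i s * enorm v.
Proof.
move=> A0 dphi dpsi C0 B1 B2.
elim=> [|r IH] i.
  rewrite /= expr0 mul1r mxE.
  case: eqP => [->|ne].
    have -> : (fun x => row s (setrow H s x)) = id.
      by apply/funext => x; rewrite row_setrow eqxx.
    have Hid : is_diff (row s H) (@id 'rV[R]_k) id by typeclasses eauto.
    split; first exact: ex_diff.
    by move=> v; rewrite diff_val mulr1n mul1r.
  have -> : (fun x => row i (setrow H s x)) = cst (row i H).
    apply/funext => x; rewrite row_setrow; case: eqP => //.
  split; first exact: differentiable_cst.
  by move=> v; rewrite diff_cst mulr0n mul0r /= enorm0.
set x0 := row s H.
set l := (L + r)%N.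
pose M := fun x => run phi psi A L r (setrow H s x).
pose g := fun j (x : 'rV[R]_k) => row j (M x).
pose F := fun j0 (x : 'rV[R]_k) => (A l i j0 *: psi l (g j0 x) : 'rV[R]_k).
pose S := fun x => (\sum_(j0 < n | (j0 <= i)%N) F j0 x : 'rV[R]_k).
have Ef : (fun x => row i (run phi psi A L r.+1 (setrow H s x))) =
    phi l \o (fun x => (g i x, S x)).
  by apply/funext => x; rewrite /= row_layer.
rewrite Ef.
have dg : forall j, differentiable (g j) x0 := fun j => (IH j).1.
have dF : forall j0, differentiable (F j0) x0 /\ forall v, 'd (F j0) x0 v = A l i j0 *: 'd (psi l \o g j0) x0 v.
  move=> j0; apply: d_scale.
  exact: differentiable_comp.
have dF1 : forall j0, differentiable (F j0) x0 := fun j0 => (dF j0).1.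
have dF2 : forall j0 v, 'd (F j0) x0 v = A l i j0 *: ('d (psi l) (g j0 x0) ('d (g j0) x0 v)).
  move=> j0 v.
  have E1 := (dF j0).2 v.
  have E2 := diff_comp (dg j0) (dpsi l (g j0 x0)).
  exact: (etrans E1 (congr1 (fun u => A l i j0 *: u) (congr1 (fun f => f v) E2))).
have [dS ES] := d_sum (index_enum 'I_n) (fun j0 : 'I_n => (j0 <= i)%N) dF1.
have dgS : differentiable (fun x => (g i x, S x)) x0 by apply: differentiable_pair.
split; first by apply: differentiable_comp.
move=> v.
rewrite diff_comp // diff_pair //.
change (enorm ('d (phi l) (g i x0, S x0) ('d (g i) x0 v, 'd S x0 v)) <= C ^+ r.+1 * prodIA A L r.+1 i s * enorm v).
have [D1d D2d Esp] := d_phi (dphi l (g i x0, S x0)).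
rewrite Esp.
have Ew : 'd S x0 v = \sum_(j0 < n | (j0 <= i)%N) A l i j0 *: 'd (psi l) (g j0 x0) ('d (g j0) x0 v).
  exact: (etrans (ES v) (eq_bigr _ (fun j0 _ => dF2 j0 v))).
set D1 := 'd (fun u => phi l (u, S x0)) (g i x0).
set D2 := 'd (fun w => phi l (g i x0, w)) (S x0).
have e_ge0 : forall j, 0 <= enorm ('d (g j) x0 v) by move=> j; exact: enorm_ge0.
have eB : forall j, enorm ('d (g j) x0 v) <= C ^+ r * prodIA A L r j s * enorm v.
  by move=> j; exact: (IH j).2 v.
have h1 : enorm (D1 ('d (g i) x0 v)) <= C * enorm ('d (g i) x0 v).
  apply: le_trans (opnorm_d D1d _) _.
  by rewrite ler_wpM2r ?enorm_ge0 // B1.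
have op2 : 0 <= opnorm D2 by exact: opnorm_d_ge0.
have h3 : enorm (\sum_(j0 < n | (j0 <= i)%N) A l i j0 *: 'd (psi l) (g j0 x0) ('d (g j0) x0 v))
   <= \sum_(j0 < n | (j0 <= i)%N) A l i j0 * (opnorm ('d (psi l) (g j0 x0)) * enorm ('d (g j0) x0 v)).
  apply: le_trans (enorm_sum _ _ _) _; apply: ler_sum => j0 _.
  rewrite enormZ ger0_norm; last exact: A0.
  apply: ler_wpM2l; first exact: A0.
  exact: (opnorm_d (dpsi l (g j0 x0))).
rewrite -Ew in h3.
have h2 : enorm (D2 ('d S x0 v))
   <= \sum_(j0 < n | (j0 <= i)%N) A l i j0 * (C * enorm ('d (g j0) x0 v)).
  apply: le_trans (opnorm_d D2d _) _.
  apply: le_trans (ler_wpM2l op2 h3) _.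
  rewrite mulr_sumr; apply: ler_sum => j0 _.
  rewrite mulrCA; apply: ler_wpM2l; first exact: A0.
  rewrite mulrA; apply: ler_wpM2r; first exact: e_ge0.
  exact: B2.
apply: le_trans (enorm_add _ _) _.
apply: le_trans (lerD h1 h2) _.
rewrite prodIA_S exprS.
have P0 := @prodIA_ge0 _ _ A L A0.
have h4 : \sum_(j0 < n | (j0 <= i)%N) A l i j0 * (C * enorm ('d (g j0) x0 v))
   <= \sum_j C * (C ^+ r * (A (L + r)%N i j * prodIA A L r j s) * enorm v).
  rewrite big_mkcond /=; apply: ler_sum => j _.
  case: ifP => _.
    rewrite -/l mulrCA ler_wpM2l //.
    apply: le_trans (ler_wpM2l (A0 _ _ _) (eB j)) _.
    rewrite !mulrA; apply: ler_wpM2r; first exact: enorm_ge0.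
    by rewrite [A l i j * _]mulrC -mulrA.
  apply: mulr_ge0 => //; apply: mulr_ge0; last exact: enorm_ge0.
  by apply: mulr_ge0; [exact: exprn_ge0 | exact: mulr_ge0].
have h5 : C * enorm ('d (g i) x0 v) <= C * (C ^+ r * prodIA A L r i s * enorm v).
  by apply: ler_wpM2l; [exact: C0 | exact: eB].
apply: le_trans (lerD h5 h4) _.
rewrite le_eqVlt; apply/orP; left; apply/eqP.
rewrite mulrDr mulrDl; congr (_ + _); first by ring.
rewrite mulr_sumr mulr_suml; apply: eq_bigr => j _; ring.
Qed.

Unset Implicit Arguments.

Theorem theorem3p1 (R : realType) (n k : nat)
  (A : nat -> 'M[R]_n)
  (phi : nat -> 'rV[R]_k * 'rV[R]_k -> 'rV[R]_k)
  (psi : nat -> 'rV[R]_k -> 'rV[R]_k)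
  (C : R) :
  (forall l (i j : 'I_n), (i < j)%N -> A l i j = 0) ->
  (forall l (i j : 'I_n), 0 <= A l i j) ->
  (forall l (i : 'I_n), \sum_(j < n) A l i j = 1) ->
  (forall l (z : 'rV[R]_k * 'rV[R]_k), differentiable (phi l) z) ->
  (forall l (x : 'rV[R]_k), differentiable (psi l) x) ->
  0 < C ->
  (forall l (x y : 'rV[R]_k), opnorm ('d (fun u => phi l (u, y)) x) <= C) ->
  (forall l (x y z : 'rV[R]_k),
      opnorm ('d (fun v => phi l (x, v)) y) * opnorm ('d (psi l) z) <= C) ->
  forall (L r : nat) (s d : 'I_n), (s <= d)%N ->
  forall H : 'M[R]_(n, k),
    opnorm ('d (fun x => row d (run phi psi A L r (setrow H s x))) (row s H))
      <= C ^+ r * prodIA A L r d s.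
Proof.
move=> _ A0 _ dphi dpsi Cpos B1 B2 L r s d _ H.
apply: opnorm_bound.
  apply: mulr_ge0; first exact: exprn_ge0 (ltW Cpos).
  exact: (@prodIA_ge0 _ _ A L A0).
exact: (@main_ind R n k A phi psi C L s H A0 dphi dpsi (ltW Cpos) B1 B2 r d).2.
Qed.
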